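(* The $\mathbf{k}$-linear map $\mathrm{WCQSym}\to \mathbf 1_{\mathbf k}\otimes \text{Ш}^+(x)\subseteq \text{Ш}(x)$, $M_\alpha\mapsto 1\otimes x^{\otimes\theta(\alpha)}$, is an algebra isomorphism; in particular $\mathrm{WCQSym}$ is isomorphic as an algebra to $\text{Ш}^+(x)$ (via $M_\alpha\mapsto x^{\otimes\theta(\alpha)}$) and to the subalgebra $\mathbf 1_{\mathbf k}\otimes\text{Ш}^+(x)$ of the free commutative unitary Rota--Baxter algebra $\text{Ш}(x)$ of weight $1$ generated by $x$. Moreover, $\mathrm{QSym}$ is (via this map) a subalgebra of $\text{Ш}(x)$, and $\mathrm{QSym}$ is a quotient Hopf algebra of $\mathbf 1_{\mathbf k}\otimes\text{Ш}^+(x)$ (endowed with the Hopf algebra structure transported from $\mathrm{WCQSym}$).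
   Context: $\mathbf{k}$ is a commutative ring containing $\mathbb{Q}$. $\tilde{\mathbb N}=\mathbb N\cup\{\varepsilon\}$ with $0+\varepsilon=\varepsilon+\varepsilon=\varepsilon$ and $n+\varepsilon=n$ for integers $n\ge1$. $\mathbf{k}[[X]]_{\tilde{\mathbb N}}$, for $X=\{x_1<x_2<\cdots\}$, is the algebra of possibly infinite linear combinations of formal monomials $\prod x_i^{f(x_i)}$ with $f$ finitely supported $\tilde{\mathbb N}$-valued, multiplied by adding exponents in $\tilde{\mathbb N}$. An $\tilde{\mathbb N}$-composition is a finite (possibly empty) sequence $\alpha=(\alpha_1,\dots,\alpha_k)$ of elements of $\{\varepsilon,1,2,\dots\}$; $M_\alpha=\sum_{1\le i_1<\cdots<i_k}x_{i_1}^{\alpha_1}\cdots x_{i_k}^{\alpha_k}$, $M_\emptyset=1$. $\mathrm{WCQSym}$ is the $\mathbf k$-span of the (linearly independent) $M_\alpha$; it is a Hopf algebra with the power series product, coproduct $\Delta(M_{(\alpha_1,\dots,\alpha_k)})=\sum_{i=0}^kM_{(\alpha_1,\dots,\alpha_i)}\otimes M_{(\alpha_{i+1},\dots,\alpha_k)}$, counit $\epsilon(M_\alpha)=\delta_{\alpha,\emptyset}$. $\mathrm{QSym}\subseteq\mathrm{WCQSym}$ is the span of $M_\alpha$ with all entries of $\alpha$ positive integers (the usual quasi-symmetric functions, with the same coproduct and counit). $\theta$ sends an $\tilde{\mathbb N}$-composition to the weak composition obtained by replacing each entry $\varepsilon$ by $0$. For a weak composition $\gamma=(\gamma_1,\dots,\gamma_k)$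 (sequence of nonnegative integers), $x^{\otimes\gamma}=x^{\gamma_1}\otimes\cdots\otimes x^{\gamma_k}\in\mathbf k[x]^{\otimes k}$, with $x^{\otimes\emptyset}=1\in\mathbf k$. $\text{Ш}^+(x)=\bigoplus_{k\ge0}\mathbf k[x]^{\otimes k}$ with the mixable shuffle product of weight $1$: $1*\mathfrak a=\mathfrak a*1=\mathfrak a$ and $(a_1\otimes\mathfrak a')*(b_1\otimes\mathfrak b')=a_1\otimes(\mathfrak a'*(b_1\otimes\mathfrak b'))+b_1\otimes((a_1\otimes\mathfrak a')*\mathfrak b')+(a_1b_1)\otimes(\mathfrak a'*\mathfrak b')$. $\text{Ш}(x)=\mathbf k[x]\otimes\text{Ш}^+(x)=\bigoplus_{k\ge1}\mathbf k[x]^{\otimes k}$ with product $(a_0\otimes\mathfrak a)\diamond(b_0\otimes\mathfrak b)=(a_0b_0)\otimes(\mathfrak a*\mathfrak b)$ and operator $P(\mathfrak a)=1\otimes\mathfrak a$; it is known to be the free commutative unitary Rota--Baxter algebra of weight $1$ on $x$. *)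

(* Defs.v *)
From HB Require Import structures.
From mathcomp Require Import all_boot all_order all_algebra.
Set Implicit Arguments. Unset Strict Implicit. Unset Printing Implicit Defensive.
Import GRing.Theory.
Local Open Scope ring_scope.

(** * Conventions
   - An element of Ñ = N ∪ {ε} is encoded as [option nat]:
     [None] = ε, [Some n] = the integer n (so [Some 0] = 0).
   - An Ñ-composition is a [seq (option nat)] whose entries are ε or positive
     integers (predicate [ncomp]); a positive composition (QSym index) has only
     positive integer entries ([pcomp]); a weak composition is a [seq nat].
   - A formal monomial  prod_i x_{i+1}^{s_i}  of k[[X]]_Ñ is represented by a
     finite sequence [s : seq (option nat)] (exponent of x_1, x_2, ...);
     trailing zeros [Some 0] are irrelevant.  A power series is a coefficient
     function [seq (option nat) -> k]; all series below are invariant under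
     padding by zeros.
   - Elements of WCQSym (= k-span of the M_alpha) are given by formal
     k-linear combinations [seq (k * seq (option nat))] of Ñ-compositions,
     realised as power series by [real]; equality in WCQSym is equality of the
     realised power series.
   - Sh^+(x) = (+)_k k[x]^{(x)k} is the free k-module on the basis
     x^{(x)gamma}, gamma a weak composition; its elements are formal
     combinations [seq (k * seq nat)] compared through [coefSh].
     Sh(x) = k[x] (x) Sh^+(x) has basis x^{(x)(a0::gamma)} (nonempty weak
     compositions), the element 1 (x) x^{(x)gamma} being [0 :: gamma]. *)

Definition tadd (a b : option nat) : option nat :=
  match a, b with
  | Some m, Some n => Some (m + n)%N
  | None, None => None
  | None, Some n | Some n, None => if n == 0%N then None else Some n
  end.

Definition ncomp (al : seq (option nat)) : bool :=
  all (fun e => if e is Some n then (0 < n)%N else true) al.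

Definition pcomp (al : seq (option nat)) : bool :=
  all (fun e => if e is Some n then (0 < n)%N else false) al.

Definition theta (al : seq (option nat)) : seq nat := map (fun e => odflt 0%N e) al.

Definition pser (k : Type) := seq (option nat) -> k.

Definition nzexp (s : seq (option nat)) := [seq e <- s | e != Some 0%N].

(** M_alpha : coefficient 1 exactly on the monomials x_{i1}^{a1}...x_{ik}^{ak}, i1<..<ik *)
Definition Mon (k : nzRingType) (al : seq (option nat)) : pser k :=
  fun s => (nzexp s == al)%:R.

Definition tcand (e : option nat) : seq (option nat) :=
  None :: [seq Some i | i <- iota 0 (odflt 0%N e).+1].
Definition tsplit (e : option nat) : seq (option nat * option nat) :=
  [seq ab <- [seq (a, b) | a <- tcand e, b <- tcand e] | tadd ab.1 ab.2 == e].

Definition decomp (s : seq (option nat)) : seq (seq (option nat) * seq (option nat)) :=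
  foldr (fun e acc => [seq (ab.1 :: t.1, ab.2 :: t.2) | ab <- tsplit e, t <- acc])
        [:: ([::], [::])] s.

Definition psmul (k : nzRingType) (F G : pser k) : pser k :=
  fun s => \sum_(p <- decomp s) F p.1 * G p.2.

Definition real (k : nzRingType) (L : seq (k * seq (option nat))) : pser k :=
  fun s => \sum_(p <- L) p.1 * Mon k p.2 s.

Definition real2 (k : nzRingType) (T : seq (k * (seq (option nat) * seq (option nat))))
  : seq (option nat) -> seq (option nat) -> k :=
  fun s t => \sum_(p <- T) p.1 * Mon k p.2.1 s * Mon k p.2.2 t.

Definition copL (k : nzRingType) (L : seq (k * seq (option nat)))
  : seq (k * (seq (option nat) * seq (option nat))) :=
  flatten [seq [seq (p.1, (take i p.2, drop i p.2)) | i <- iota 0 (size p.2).+1] | p <- L].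

Definition linL (k : nzRingType) (f : seq (option nat) -> seq (k * seq (option nat)))
  (L : seq (k * seq (option nat))) : seq (k * seq (option nat)) :=
  flatten [seq [seq (p.1 * q.1, q.2) | q <- f p.2] | p <- L].

Definition linL2 (k : nzRingType) (f : seq (option nat) -> seq (k * seq (option nat)))
  (T : seq (k * (seq (option nat) * seq (option nat))))
  : seq (k * (seq (option nat) * seq (option nat))) :=
  flatten [seq [seq (p.1 * q1.1 * q2.1, (q1.2, q2.2)) | q1 <- f p.2.1, q2 <- f p.2.2] | p <- T].

Definition coefSh (k : nzRingType) (L : seq (k * seq nat)) (g : seq nat) : k :=
  \sum_(p <- L) (p.2 == g)%:R * p.1.

(** mixable shuffle of weight 1 on basis tensors x^{(x)A} * x^{(x)B}
    (multiset of resulting basis tensors, all with coefficient 1):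
    1 * b = b, a * 1 = a,
    (a1 (x) a') * (b1 (x) b') = a1 (x) (a' * (b1 (x) b')) + b1 (x) ((a1 (x) a') * b')
                                + (a1 b1) (x) (a' * b'),  with x^i x^j = x^(i+j). *)
Fixpoint msh (A B : seq nat) {struct A} : seq (seq nat) :=
  match A with
  | [::] => [:: B]
  | a :: A' =>
      let fix mshA (B : seq nat) : seq (seq nat) :=
        match B with
        | [::] => [:: a :: A']
        | b :: B' => [seq a :: g | g <- msh A' B]
                     ++ [seq b :: g | g <- mshA B']
                     ++ [seq (a + b)%N :: g | g <- msh A' B']
        end in
      mshA B
  end.

Definition shL (k : nzRingType) (L1 L2 : seq (k * seq nat)) : seq (k * seq nat) :=
  flatten [seq [seq (p.1 * q.1, g) | g <- msh p.2 q.2] | p <- L1, q <- L2].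

(** product <> of Sh(x) = k[x] (x) Sh^+(x):
    (a0 (x) a) <> (b0 (x) b) = (a0 b0) (x) (a * b) *)
Definition diam_basis (A B : seq nat) : seq (seq nat) :=
  match A, B with
  | a0 :: A', b0 :: B' => [seq (a0 + b0)%N :: g | g <- msh A' B']
  | _, _ => [::]
  end.
Definition diamL (k : nzRingType) (L1 L2 : seq (k * seq nat)) : seq (k * seq nat) :=
  flatten [seq [seq (p.1 * q.1, g) | g <- diam_basis p.2 q.2] | p <- L1, q <- L2].

Definition phiL (k : nzRingType) (L : seq (k * seq (option nat))) : seq (k * seq nat) :=
  [seq (p.1, 0%N :: theta p.2) | p <- L].
Definition psiL (k : nzRingType) (L : seq (k * seq (option nat))) : seq (k * seq nat) :=
  [seq (p.1, theta p.2) | p <- L].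

Definition oneTensor (k : nzRingType) (G : seq (k * seq nat)) : seq (k * seq nat) :=
  [seq (p.1, 0%N :: p.2) | p <- G].

Definition wcq (k : nzRingType) (L : seq (k * seq (option nat))) : bool :=
  all (fun p => ncomp p.2) L.
Definition qsym (k : nzRingType) (L : seq (k * seq (option nat))) : bool :=
  all (fun p => pcomp p.2) L.

(* Main.v *)
Require Import Defs.
From mathcomp Require Import all_boot all_order all_algebra.
From mathcomp Require Import ring.
Import GRing.Theory.
Local Open Scope ring_scope.


Fixpoint qsh (A B : seq (option nat)) {struct A} : seq (seq (option nat)) :=
  match A with
  | [::] => [:: B]
  | a :: A' =>
      let fix qshA (B : seq (option nat)) : seq (seq (option nat)) :=
        match B with
        | [::] => [:: a :: A']
        | b :: B' => [seq a :: g | g <- qsh A' B]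
                     ++ [seq b :: g | g <- qshA B']
                     ++ [seq tadd a b :: g | g <- qsh A' B']
        end in
      qshA B
  end.

Lemma qsh0l B : qsh [::] B = [:: B]. Proof. by []. Qed.
Lemma qsh0r A : qsh A [::] = [:: A]. Proof. by case: A. Qed.
Lemma qsh_cons a A b B : qsh (a :: A) (b :: B) =
  [seq a :: g | g <- qsh A (b :: B)] ++ [seq b :: g | g <- qsh (a :: A) B]
  ++ [seq tadd a b :: g | g <- qsh A B].
Proof. by []. Qed.

Lemma theta_tadd a b : odflt 0%N (tadd a b) = (odflt 0%N a + odflt 0%N b)%N.
Proof. by case: a => [m|]; case: b => [n|] //=; case: ifP => [/eqP->|] //=; rewrite ?addn0.
Qed.

Lemma msh_cons a A b B : msh (a :: A) (b :: B) =
  [seq a :: g | g <- msh A (b :: B)] ++ [seq b :: g | g <- msh (a :: A) B]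
  ++ [seq (a + b)%N :: g | g <- msh A B].
Proof. by []. Qed.

Lemma theta_cons a A : theta (a :: A) = odflt 0%N a :: theta A.
Proof. by []. Qed.

Lemma theta_qsh A B : map theta (qsh A B) = msh (theta A) (theta B).
Proof.
elim: A B => [|a A IHA] B; first by [].
elim: B => [|b B IHB]; first by [].
rewrite qsh_cons !map_cat -!map_comp !theta_cons msh_cons -theta_tadd.
congr (_ ++ _ ++ _).
- by rewrite -theta_cons -IHA -map_comp.
- by rewrite -theta_cons -IHB -map_comp.
- by rewrite -IHA -map_comp.
Qed.

Lemma ncomp_cons a A : ncomp (a :: A) = (if a is Some n then (0 < n)%N else true) && ncomp A.
Proof. by []. Qed.

Lemma ncomp_qsh A B : ncomp A -> ncomp B -> all ncomp (qsh A B).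
Proof.
elim: A B => [|a A IHA] B; first by rewrite /= andbT.
elim: B => [|b B IHB]; first by rewrite /= andbT.
move=> hA hB; rewrite qsh_cons !all_cat !all_map.
move: (hA) (hB); rewrite !ncomp_cons => /andP[ha hA'] /andP[hb hB'].
apply/and3P; split; apply/allP => g hg /=.
- by rewrite ha (allP (IHA _ hA' hB)).
- by rewrite hb (allP (IHB hA hB') g hg).
- rewrite (allP (IHA _ hA' hB')) // andbT.
  move: ha hb; clear; case: a => [m|]; case: b => [n|] //= ha hb.
  + by rewrite addn_gt0 ha.
  + by rewrite (gtn_eqF ha).
  + by rewrite (gtn_eqF hb).
Qed.

Lemma pcomp_qsh A B : Defs.pcomp A -> Defs.pcomp B -> all Defs.pcomp (qsh A B).
Proof.
elim: A B => [|a A IHA] B; first by rewrite /= andbT.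
elim: B => [|b B IHB]; first by rewrite /= andbT.
move=> hA hB; rewrite qsh_cons !all_cat !all_map.
move: (hA) (hB) => /= /andP[ha hA'] /andP[hb hB'].
apply/and3P; split; apply/allP => g hg /=.
- by rewrite ha (allP (IHA _ hA' hB)).
- by rewrite hb (allP (IHB hA hB') g hg).
- rewrite (allP (IHA _ hA' hB')) // andbT.
  move: ha hb; clear; case: a => [m|]; case: b => [n|] //= ha hb.
  by rewrite addn_gt0 ha.
Qed.


Section Main.
Variable k : comNzRingType.

Lemma natr_and (b1 b2 : bool) : ((b1 && b2)%:R : k) = b1%:R * b2%:R.
Proof. by rewrite -mulnb natrM. Qed.

Lemma sum_pred1 (T : eqType) (r : seq T) (c : T) (F : T -> k) :
  uniq r -> \sum_(a <- r) (a == c)%:R * F a = (c \in r)%:R * F c.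
Proof.
elim: r => [|x r IH] /=; first by rewrite big_nil mul0r.
case/andP=> xr ur; rewrite big_cons IH // in_cons.
case: (eqVneq x c) => [<-|xc] /=.
  by rewrite (negbTE xr) mul0r addr0.
by rewrite mul0r add0r.
Qed.

Lemma nzexp_cons e s : nzexp (e :: s) = if e == Some 0%N then nzexp s else e :: nzexp s.
Proof. by rewrite /nzexp /=; case: eqP. Qed.

Lemma decomp_cons e s : decomp (e :: s) =
  [seq (ab.1 :: t.1, ab.2 :: t.2) | ab <- tsplit e, t <- decomp s].
Proof. by []. Qed.

Lemma uniq_tcand e : uniq (tcand e).
Proof.
rewrite /tcand cons_uniq (map_inj_uniq (@Some_inj _)) iota_uniq andbT.
by apply/mapP => -[].
Qed.

Lemma tadd0l b : tadd (Some 0%N) b = b. Proof. by case: b. Qed.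
Lemma tadd0r a : tadd a (Some 0%N) = a. Proof. by case: a => [[|m]|] //=; rewrite addn0. Qed.

Lemma mem_tcand e a b : tadd a b = e -> (a \in tcand e) && (b \in tcand e).
Proof.
have H : forall n m, (m <= n)%N -> Some m \in tcand (Some n).
  by move=> n m h; rewrite /tcand in_cons (mem_map (@Some_inj _)) mem_iota add0n ltnS h orbT.
have N : forall f, None \in tcand f by move=> f; rewrite /tcand in_cons eqxx.
case: a => [m|]; case: b => [n|] <- /=; rewrite ?N //=.
- by rewrite !H // ?leq_addl ?leq_addr.
- by case: ifP => [/eqP->|_]; rewrite ?H ?N.
- by case: ifP => [/eqP->|_]; rewrite ?H ?N.
Qed.

Lemma sum_tsplit e (G : option nat * option nat -> k) :
  \sum_(ab <- tsplit e) G ab =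
  \sum_(a <- tcand e) \sum_(b <- tcand e) (tadd a b == e)%:R * G (a, b).
Proof.
rewrite /tsplit big_filter big_mkcond big_allpairs /=.
apply: eq_bigr => a _; apply: eq_bigr => b _.
by case: eqP => _; rewrite ?mul1r ?mul0r.
Qed.

Lemma tsplit_decompose e (G : option nat -> option nat -> k) : e != Some 0%N ->
  \sum_(a <- tcand e) \sum_(b <- tcand e) (tadd a b == e)%:R * G a b =
  G (Some 0%N) e + G e (Some 0%N) +
  \sum_(a <- tcand e) \sum_(b <- tcand e)
     ((tadd a b == e) && (a != Some 0%N) && (b != Some 0%N))%:R * G a b.
Proof.
move=> he.
have eS : e \in tcand e by have /andP[] := @mem_tcand _ _ _ (tadd0r e).
have S0 : Some 0%N \in tcand e by have /andP[] := @mem_tcand _ _ _ (tadd0l e).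
have pw : forall a b, (tadd a b == e)%:R * G a b =
  (a == Some 0%N)%:R * ((b == e)%:R * G (Some 0%N) b) +
  (a == e)%:R * ((b == Some 0%N)%:R * ((a != Some 0%N)%:R * G a (Some 0%N))) +
  ((tadd a b == e) && (a != Some 0%N) && (b != Some 0%N))%:R * G a b.
  move=> a b; case: (eqVneq a (Some 0%N)) => [->|a0]; rewrite ?tadd0l.
    have he' : (Some 0%N == e) = false by rewrite eq_sym (negbTE he).
    by rewrite he' andbF /= !mul0r mul1r !addr0.
  case: (eqVneq b (Some 0%N)) => [->|b0]; rewrite ?tadd0r.
    by rewrite andbF /= !mul0r mul1r add0r addr0; case: (a == e); rewrite ?mul1r ?mul0r.
  by rewrite /= !mul0r !mulr0 !add0r !andbT.
under eq_bigr do under eq_bigr do rewrite pw.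
under eq_bigr do rewrite !big_split /=.
rewrite !big_split /=; congr (_ + _ + _).
- under eq_bigr do rewrite -mulr_sumr.
  by rewrite sum_pred1 ?uniq_tcand // S0 mul1r sum_pred1 ?uniq_tcand // eS mul1r.
- under eq_bigr do rewrite -mulr_sumr sum_pred1 ?uniq_tcand // S0 mul1r.
  by rewrite sum_pred1 ?uniq_tcand // eS he !mul1r.
Qed.

Lemma third_sum e a0 b0 X (H : option nat -> option nat -> k) :
  a0 != Some 0%N -> b0 != Some 0%N ->
  (forall a b, a != Some 0%N -> b != Some 0%N -> H a b = (a == a0)%:R * ((b == b0)%:R * X)) ->
  \sum_(a <- tcand e) \sum_(b <- tcand e)
     ((tadd a b == e) && (a != Some 0%N) && (b != Some 0%N))%:R * H a b =
  (tadd a0 b0 == e)%:R * X.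
Proof.
move=> ha0 hb0 hH.
have pw : forall a b, ((tadd a b == e) && (a != Some 0%N) && (b != Some 0%N))%:R * H a b =
   (a == a0)%:R * ((b == b0)%:R * ((tadd a0 b0 == e)%:R * X)).
  move=> a b; case: (eqVneq a (Some 0%N)) => [->|a0'].
    by rewrite andbF mul0r eq_sym (negbTE ha0) mul0r.
  case: (eqVneq b (Some 0%N)) => [->|b0'].
    by rewrite andbF mul0r [Some 0%N == _]eq_sym (negbTE hb0) mul0r mulr0.
  rewrite !andbT hH //.
  case: (eqVneq a a0) => [->|aa]; last by rewrite !mul0r mulr0.
  case: (eqVneq b b0) => [->|bb]; last by rewrite !mul0r !mulr0.
  by rewrite !mul1r.
under eq_bigr do under eq_bigr do rewrite pw.
under eq_bigr do rewrite -mulr_sumr sum_pred1 ?uniq_tcand //.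
rewrite sum_pred1 ?uniq_tcand //.
case: (eqVneq (tadd a0 b0) e) => [h|h]; last by rewrite !mul0r !mulr0.
by have /andP[-> ->] := @mem_tcand _ _ _ h; rewrite !mul1r.
Qed.

Definition PP s al be : k := \sum_(t <- decomp s) (nzexp t.1 == al)%:R * (nzexp t.2 == be)%:R.
Definition QQ s al be : k := \sum_(g <- qsh al be) (nzexp s == g)%:R.

Lemma eqcons_R (c : option nat) x be : ((c :: x == be)%:R : k) =
  if be is b0 :: be' then (c == b0)%:R * (x == be')%:R else 0.
Proof. by case: be => [|b0 be'] //=; rewrite eqseq_cons natr_and. Qed.

Lemma sum_qsh_cons c x a0 al b0 be :
  \sum_(g <- qsh (a0 :: al) (b0 :: be)) ((c :: x == g)%:R : k) =
  (c == a0)%:R * \sum_(g <- qsh al (b0 :: be)) (x == g)%:R +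
  (c == b0)%:R * \sum_(g <- qsh (a0 :: al) be) (x == g)%:R +
  (c == tadd a0 b0)%:R * \sum_(g <- qsh al be) (x == g)%:R.
Proof.
rewrite qsh_cons !big_cat /= !big_map !mulr_sumr addrA.
by congr (_ + _ + _); apply: eq_bigr => g _; rewrite eqseq_cons natr_and.
Qed.

Definition Gf s al be (a b : option nat) : k :=
  \sum_(t <- decomp s) (nzexp (a :: t.1) == al)%:R * (nzexp (b :: t.2) == be)%:R.

Lemma G1 s e al be : e != Some 0%N ->
  Gf s al be (Some 0%N) e = if be is b0 :: be' then (e == b0)%:R * PP s al be' else 0.
Proof.
move=> he; rewrite /Gf /PP; case: be => [|b0 be'].
  by apply: big1 => t _; rewrite !nzexp_cons eqxx (negbTE he) /= ?eqcons_R ?mulr0.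
by rewrite mulr_sumr; apply: eq_bigr => t _; rewrite !nzexp_cons eqxx (negbTE he) /= ?eqcons_R ?natr_and mulrCA.
Qed.

Lemma G2 s e al be : e != Some 0%N ->
  Gf s al be e (Some 0%N) = if al is a0 :: al' then (e == a0)%:R * PP s al' be else 0.
Proof.
move=> he; rewrite /Gf /PP; case: al => [|a0 al'].
  by apply: big1 => t _; rewrite !nzexp_cons eqxx (negbTE he) /= ?eqcons_R ?mul0r.
by rewrite mulr_sumr; apply: eq_bigr => t _; rewrite !nzexp_cons eqxx (negbTE he) /= ?eqcons_R ?natr_and mulrA.
Qed.

Lemma G3 s al be a b : a != Some 0%N -> b != Some 0%N -> Gf s al be a b =
   if al is a0 :: al' then if be is b0 :: be' then
     (a == a0)%:R * ((b == b0)%:R * PP s al' be') else 0 else 0.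
Proof.
move=> ha hb; rewrite /Gf /PP.
case: al => [|a0 al']; first by apply: big1 => t _; rewrite !nzexp_cons (negbTE ha) (negbTE hb) /= ?eqcons_R ?mul0r.
case: be => [|b0 be']; first by apply: big1 => t _; rewrite !nzexp_cons (negbTE ha) (negbTE hb) /= ?eqcons_R ?mulr0.
rewrite !mulr_sumr; apply: eq_bigr => t _; rewrite !nzexp_cons (negbTE ha) (negbTE hb) /= ?eqcons_R ?natr_and.
by rewrite -!mulrA; congr (_ * _); rewrite mulrCA.
Qed.

Lemma PQ s : forall al be, ncomp al -> ncomp be -> PP s al be = QQ s al be.
Proof.
elim: s => [|e s IH] al be hal hbe.
  rewrite /PP /QQ /= big_seq1 /=.
  case: al hal => [|a0 al] hal; case: be hbe => [|b0 be] hbe;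
    rewrite ?qsh0l ?qsh0r ?big_seq1 ?mul1r ?mul0r ?mulr0 //.
  by rewrite qsh_cons !big_cat /= !big_map !big1 ?addr0.
case: (eqVneq e (Some 0%N)) => [->|he].
  rewrite /PP /QQ decomp_cons big_allpairs_dep.
  have -> : tsplit (Some 0%N) = [:: (Some 0%N, Some 0%N)] by [].
  rewrite big_seq1 nzexp_cons eqxx; have := IH al be hal hbe; rewrite /PP /QQ => <-.
  by apply: eq_bigr => t _; rewrite /nzexp /=.
rewrite /PP decomp_cons big_allpairs_dep sum_tsplit /=.
rewrite (tsplit_decompose e (Gf s al be) he) G1 // G2 // /QQ nzexp_cons (negbTE he).
have nz0 : forall a al, ncomp (a :: al) -> a != Some 0%N by move=> [[|m]|] al'.
have T0 : forall al be, (al = [::] \/ be = [::]) ->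
  \sum_(a <- tcand e) \sum_(b <- tcand e)
    ((tadd a b == e) && (a != Some 0%N) && (b != Some 0%N))%:R * Gf s al be a b = 0.
  move=> al1 be1 h; apply: big1 => a _; apply: big1 => b _.
  case: (eqVneq a (Some 0%N)) => [|ha]; rewrite ?andbF ?mul0r //.
  case: (eqVneq b (Some 0%N)) => [|hb]; rewrite ?andbF ?mul0r //.
  rewrite G3 //; case: h => ->; first by rewrite mulr0.
  by case: al1 => [|? ?]; rewrite mulr0.
case: al hal => [|a0 al'] hal; case: be hbe => [|b0 be'] hbe.
- by rewrite T0 ?qsh0l ?big_seq1 /= ?addr0; auto.
- have hbe' : ncomp be' by case/andP: hbe.
  rewrite T0; last by auto.
  rewrite qsh0l big_seq1 /= !addr0 (IH _ _ hal hbe') /QQ qsh0l big_seq1 eqseq_cons natr_and.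
  by rewrite eq_sym.
- have hal' : ncomp al' by case/andP: hal.
  rewrite T0; last by auto.
  rewrite qsh0r big_seq1 /= addr0 add0r (IH _ _ hal' hbe) /QQ qsh0r big_seq1 eqseq_cons natr_and.
  by rewrite eq_sym.
- have hbe' : ncomp be' by case/andP: hbe.
  have hal' : ncomp al' by case/andP: hal.
  rewrite (@third_sum e a0 b0 (PP s al' be') _ (nz0 _ _ hal) (nz0 _ _ hbe)); last by move=> a b ha hb; rewrite G3.
  rewrite sum_qsh_cons (IH _ _ hal hbe') (IH _ _ hal' hbe) (IH _ _ hal' hbe').
  rewrite /QQ [e == b0]eq_sym [e == a0]eq_sym.
  by rewrite [e == tadd _ _]eq_sym [X in X + _ = _]addrC.
Qed.

End Main.


Section Signs.
Variable k : comNzRingType.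

Definition sgw (w : seq (option nat)) : k := (-1) ^+ count_mem None w.
Definition delw (w : seq (option nat)) := [seq e <- w | e != None].
Definition hdw (w : seq (option nat)) := if w is a :: _ then a != None else true.
Definition wt (w : seq (option nat)) : k := if hdw w then sgw w else 0.

Lemma sgw_N w : sgw (None :: w) = - sgw w.
Proof. by rewrite /sgw /= exprS mulN1r. Qed.
Lemma sgw_S n w : sgw (Some n :: w) = sgw w.
Proof. by rewrite /sgw /=. Qed.
Lemma sgw_nil : sgw [::] = 1. Proof. by []. Qed.
Lemma delw_nil : delw [::] = [::]. Proof. by []. Qed.
Lemma delw_N w : delw (None :: w) = delw w. Proof. by []. Qed.
Lemma delw_S n w : delw (Some n :: w) = Some n :: delw w. Proof. by []. Qed.
Lemma tadd_NS y : (0 < y)%N -> tadd None (Some y) = Some y.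
Proof. by case: y. Qed.
Lemma tadd_SN y : (0 < y)%N -> tadd (Some y) None = Some y.
Proof. by case: y. Qed.

Lemma big_cat3 (T : Type) (l1 l2 l3 : seq T) (F : T -> k) :
  \sum_(x <- l1 ++ l2 ++ l3) F x = \sum_(x <- l1) F x + \sum_(x <- l2) F x + \sum_(x <- l3) F x.
Proof. by rewrite !big_cat /= addrA. Qed.

Lemma sum_cons_S m (l : seq (seq (option nat))) (f : seq (option nat) -> k) :
  \sum_(j <- l) sgw (Some m :: j) * f (delw (Some m :: j)) =
  \sum_(j <- l) sgw j * (fun g => f (Some m :: g)) (delw j).
Proof. by apply: eq_bigr => j _; rewrite sgw_S delw_S. Qed.

Lemma sum_cons_N (l : seq (seq (option nat))) (f : seq (option nat) -> k) :
  \sum_(j <- l) sgw (None :: j) * f (delw (None :: j)) =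
  - \sum_(j <- l) sgw j * f (delw j).
Proof. by rewrite -sumrN; apply: eq_bigr => j _; rewrite sgw_N delw_N mulNr. Qed.

Lemma lemA n : forall u v, (size u + size v <= n)%N -> ncomp u -> ncomp v ->
  forall f : seq (option nat) -> k,
  \sum_(w <- qsh u v) sgw w * f (delw w) =
  sgw u * sgw v * \sum_(g <- qsh (delw u) (delw v)) f g.
Proof.
elim: n => [|n IH] [|a u] [|b v] hs hu hv f;
  rewrite ?delw_nil ?qsh0l ?qsh0r ?big_seq1 ?sgw_nil ?mul1r ?mulr1 //.
rewrite qsh_cons big_cat3 !big_map.
move: (hu) (hv) => /andP[ha hu1] /andP[hb hv1].
have s1 : (size u + size (b :: v) <= n)%N by move: hs; rewrite /= addSn ltnS.
have s2 : (size (a :: u) + size v <= n)%N by move: hs; rewrite /= addnS ltnS.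
have s3 : (size u + size v <= n)%N by apply: leq_trans s2; rewrite leq_add2r.
clear hs; case: a ha hu s2 => [x|] ha hu' s2; case: b hb hv s1 => [y|] hb hv' s1.
- rewrite (_ : tadd (Some x) (Some y) = Some (x + y)) // !sum_cons_S.
  rewrite (IH _ _ s1 hu1 hv' (fun g => f (Some x :: g))).
  rewrite (IH _ _ s2 hu' hv1 (fun g => f (Some y :: g))).
  rewrite (IH _ _ s3 hu1 hv1 (fun g => f (Some (x + y) :: g))).
  rewrite !delw_S qsh_cons big_cat3 !big_map !sgw_S.
  ring.
- rewrite tadd_SN // !sum_cons_S sum_cons_N.
  rewrite (IH _ _ s1 hu1 hv' (fun g => f (Some x :: g))).
  rewrite (IH _ _ s2 hu' hv1 f).
  rewrite (IH _ _ s3 hu1 hv1 (fun g => f (Some x :: g))).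
  rewrite !delw_S !delw_N !sgw_S !sgw_N.
  ring.
- rewrite tadd_NS // !sum_cons_S sum_cons_N.
  rewrite (IH _ _ s1 hu1 hv' f).
  rewrite (IH _ _ s2 hu' hv1 (fun g => f (Some y :: g))).
  rewrite (IH _ _ s3 hu1 hv1 (fun g => f (Some y :: g))).
  rewrite !delw_S !delw_N !sgw_S !sgw_N.
  ring.
- rewrite (_ : tadd None None = None) // !sum_cons_N.
  rewrite (IH _ _ s1 hu1 hv' f) (IH _ _ s2 hu' hv1 f) (IH _ _ s3 hu1 hv1 f).
  rewrite !delw_N !sgw_N.
  ring.
Qed.


Lemma wt_S m j : wt (Some m :: j) = sgw j. Proof. by rewrite /wt /= sgw_S. Qed.
Lemma wt_N j : wt (None :: j) = 0. Proof. by []. Qed.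
Lemma wt_nil : wt [::] = 1. Proof. by []. Qed.

Lemma lemA' u v : ncomp u -> ncomp v -> forall f : seq (option nat) -> k,
  \sum_(w <- qsh u v) sgw w * f (delw w) =
  sgw u * sgw v * \sum_(g <- qsh (delw u) (delw v)) f g.
Proof. by move=> hu hv f; apply: (@lemA (size u + size v)). Qed.

Lemma sum_wt_S m (l : seq (seq (option nat))) (f : seq (option nat) -> k) :
  \sum_(j <- l) wt (Some m :: j) * f (delw (Some m :: j)) =
  \sum_(j <- l) sgw j * (fun g => f (Some m :: g)) (delw j).
Proof. by apply: eq_bigr => j _; rewrite wt_S delw_S. Qed.

Lemma sum_wt_N (l : seq (seq (option nat))) (f : seq (option nat) -> k) :
  \sum_(j <- l) wt (None :: j) * f (delw (None :: j)) = 0.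
Proof. by apply: big1 => j _; rewrite wt_N mul0r. Qed.

Lemma lemB u v : ncomp u -> ncomp v -> forall f : seq (option nat) -> k,
  \sum_(w <- qsh u v) wt w * f (delw w) =
  wt u * wt v * \sum_(g <- qsh (delw u) (delw v)) f g.
Proof.
case: u => [|a u]; case: v => [|b v] hu hv f;
  rewrite ?delw_nil ?qsh0l ?qsh0r ?big_seq1 ?wt_nil ?mul1r ?mulr1 //.
rewrite qsh_cons big_cat3 !big_map.
move: (hu) (hv) => /andP[ha hu1] /andP[hb hv1].
case: a ha hu => [x|] ha hu; case: b hb hv => [y|] hb hv.
- rewrite (_ : tadd (Some x) (Some y) = Some (x + y)) // !sum_wt_S.
  rewrite (@lemA' _ _ hu1 hv (fun g => f (Some x :: g))).
  rewrite (@lemA' _ _ hu hv1 (fun g => f (Some y :: g))).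
  rewrite (@lemA' _ _ hu1 hv1 (fun g => f (Some (x + y) :: g))).
  rewrite !delw_S qsh_cons big_cat3 !big_map !sgw_S !wt_S.
  ring.
- rewrite tadd_SN // !sum_wt_S sum_wt_N.
  rewrite (@lemA' _ _ hu1 hv (fun g => f (Some x :: g))).
  rewrite (@lemA' _ _ hu1 hv1 (fun g => f (Some x :: g))).
  rewrite !delw_N !sgw_N wt_N.
  ring.
- rewrite tadd_NS // !sum_wt_S sum_wt_N.
  rewrite (@lemA' _ _ hu hv1 (fun g => f (Some y :: g))).
  rewrite (@lemA' _ _ hu1 hv1 (fun g => f (Some y :: g))).
  rewrite !delw_N !sgw_N wt_N.
  ring.
- rewrite (_ : tadd None None = None) // !sum_wt_N wt_N.
  ring.
Qed.

Lemma sum_iotaS n (F : nat -> k) :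
  \sum_(i <- iota 0 n.+1) F i = F 0%N + \sum_(i <- iota 0 n) F i.+1.
Proof.
rewrite /= big_cons; congr (_ + _).
have := iotaDl 1 0 n; rewrite addn0 => ->.
by rewrite big_map; apply: eq_bigr => i _; rewrite add1n.
Qed.

Lemma lemI2 al : forall F2 : seq (option nat) -> seq (option nat) -> k,
  \sum_(i <- iota 0 (size al).+1)
     sgw (take i al) * wt (drop i al) * F2 (delw (take i al)) (delw (drop i al)) =
  sgw al * \sum_(j <- iota 0 (size (delw al)).+1) F2 (take j (delw al)) (drop j (delw al)).
Proof.
elim: al => [|a al IH] F2; first by rewrite /= !big_seq1 /= sgw_nil wt_nil !mul1r.
rewrite [in LHS]sum_iotaS take0 drop0 sgw_nil mul1r delw_nil.
have tk : forall i (s : seq (option nat)) c, take i.+1 (c :: s) = c :: take i s by [].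
have dp : forall i (s : seq (option nat)) c, drop i.+1 (c :: s) = drop i s by [].
under eq_bigr do rewrite tk dp.
case: a => [m|].
- have := IH (fun x y => F2 (Some m :: x) y) => IH'.
  under eq_bigr do rewrite sgw_S delw_S.
  rewrite IH' delw_S sgw_S wt_S [in RHS]sum_iotaS take0 drop0.
  under [in RHS]eq_bigr do rewrite tk dp.
  by rewrite mulrDr.
- under eq_bigr do rewrite sgw_N delw_N mulNr mulNr.
  by rewrite sumrN IH wt_N mul0r add0r sgw_N delw_N mulNr.
Qed.

Lemma lemComult al (F2 : seq (option nat) -> seq (option nat) -> k) :
  \sum_(i <- iota 0 (size al).+1)
     wt (take i al) * wt (drop i al) * F2 (delw (take i al)) (delw (drop i al)) =
  wt al * \sum_(j <- iota 0 (size (delw al)).+1) F2 (take j (delw al)) (drop j (delw al)).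
Proof.
case: al => [|[m|] al]; first by rewrite /= !big_seq1 /= wt_nil !mul1r.
- rewrite -[wt _]/(sgw (Some m :: al)) -lemI2.
  apply: eq_bigr => i _; congr (_ * _ * _).
  by case: i => [|i] //=; rewrite wt_S sgw_S.
- rewrite wt_N mul0r; apply: big1 => i _.
  case: i => [|i]; first by rewrite take0 drop0 wt_N mulr0 mul0r.
  by rewrite (_ : take i.+1 (None :: al) = None :: take i al) // wt_N !mul0r.
Qed.
End Signs.


Section Assembly.
Variable k : comNzRingType.

Definition mulL (L1 L2 : seq (k * seq (option nat))) : seq (k * seq (option nat)) :=
  flatten [seq [seq (p.1 * q.1, g) | g <- qsh p.2 q.2] | p <- L1, q <- L2].

Lemma sum_pairs (A B : Type) (C : Type) (L1 : seq (k * A)) (L2 : seq (k * B))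
  (H : k * A -> k * B -> seq C) (Phi : C -> k) :
  \sum_(x <- flatten [seq [seq (p.1 * q.1, g) | g <- H p q] | p <- L1, q <- L2]) x.1 * Phi x.2 =
  \sum_(p <- L1) \sum_(q <- L2) p.1 * q.1 * \sum_(g <- H p q) Phi g.
Proof.
rewrite big_flatten /= big_allpairs_dep; apply: eq_bigr => p _; apply: eq_bigr => q _.
by rewrite big_map mulr_sumr.
Qed.

Lemma coefShE (L : seq (k * seq nat)) c : coefSh L c = \sum_(x <- L) x.1 * (x.2 == c)%:R.
Proof. by apply: eq_bigr => x _; rewrite mulrC. Qed.

Lemma coefSh_phiL (L : seq (k * seq (option nat))) c : coefSh (phiL L) c = \sum_(p <- L) p.1 * (0%N :: theta p.2 == c)%:R.
Proof. by rewrite coefShE big_map. Qed.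

Lemma coefSh_psiL (L : seq (k * seq (option nat))) c : coefSh (psiL L) c = \sum_(p <- L) p.1 * (theta p.2 == c)%:R.
Proof. by rewrite coefShE big_map. Qed.

Lemma phiL_mul (L1 L2 : seq (k * seq (option nat))) : coefSh (phiL (mulL L1 L2)) =1 coefSh (diamL (phiL L1) (phiL L2)).
Proof.
move=> c; rewrite coefSh_phiL /mulL (@sum_pairs _ _ _ _ _ _ (fun a => (0%N :: theta a == c)%:R)).
rewrite coefShE /diamL (@sum_pairs _ _ _ _ _ _ (fun g => (g == c)%:R)) !big_map.
apply: eq_bigr => p _; rewrite big_map; apply: eq_bigr => q _; congr (_ * _).
by rewrite /= big_map -theta_qsh big_map.
Qed.

Lemma psiL_mul (L1 L2 : seq (k * seq (option nat))) : coefSh (psiL (mulL L1 L2)) =1 coefSh (shL (psiL L1) (psiL L2)).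
Proof.
move=> c; rewrite coefSh_psiL /mulL (@sum_pairs _ _ _ _ _ _ (fun a => (theta a == c)%:R)).
rewrite coefShE /shL (@sum_pairs _ _ _ _ _ _ (fun g => (g == c)%:R)) !big_map.
apply: eq_bigr => p _; rewrite big_map; apply: eq_bigr => q _; congr (_ * _).
by rewrite /= -theta_qsh big_map.
Qed.


Lemma mem_mulL (L1 L2 : seq (k * seq (option nat))) x : x \in mulL L1 L2 ->
  exists p q, [/\ p \in L1, q \in L2 & x.2 \in qsh p.2 q.2].
Proof.
case/flattenP => l /allpairsP [[p q] [hp hq ->]] /mapP [g hg ->].
by exists p, q.
Qed.

Lemma wcq_mulL (L1 L2 : seq (k * seq (option nat))) : wcq L1 -> wcq L2 -> wcq (mulL L1 L2).
Proof.
move=> h1 h2; apply/allP => x /mem_mulL [p [q [hp hq hx]]].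
have h1p : ncomp p.2 by exact: (allP h1 p hp).
have h2q : ncomp q.2 by exact: (allP h2 q hq).
exact: (allP (ncomp_qsh _ _ h1p h2q) _ hx).
Qed.

Lemma qsym_mulL (L1 L2 : seq (k * seq (option nat))) : qsym L1 -> qsym L2 -> qsym (mulL L1 L2).
Proof.
move=> h1 h2; apply/allP => x /mem_mulL [p [q [hp hq hx]]].
have h1p : Defs.pcomp p.2 by exact: (allP h1 p hp).
have h2q : Defs.pcomp q.2 by exact: (allP h2 q hq).
exact: (allP (pcomp_qsh _ _ h1p h2q) _ hx).
Qed.

Definition thinv (g : seq nat) : seq (option nat) :=
  map (fun n => if n is 0%N then None else Some n) g.

Lemma theta_thinv g : theta (thinv g) = g.
Proof. by elim: g => [|[|n] g IH] //=; rewrite IH. Qed.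

Lemma ncomp_thinv g : ncomp (thinv g).
Proof. by elim: g => [|[|n] g IH] //=. Qed.

Lemma thinv_theta a : ncomp a -> thinv (theta a) = a.
Proof.
elim: a => [|[[|n]|] a IH] //= h; by rewrite IH.
Qed.

Lemma theta_inj a b : ncomp a -> ncomp b -> (theta a == theta b) = (a == b).
Proof.
move=> ha hb; apply/eqP/eqP => [h|->] //.
by rewrite -(thinv_theta _ ha) -(thinv_theta _ hb) h.
Qed.

Lemma ncomp_nzexp s : ncomp (nzexp s).
Proof. by elim: s => [|[[|n]|] s IH] //=. Qed.

Lemma nzexp_id a : ncomp a -> nzexp a = a.
Proof. by elim: a => [|[[|n]|] a IH] //= h; rewrite IH. Qed.

Lemma realE (L : seq (k * seq (option nat))) s : real L s = \sum_(p <- L) p.1 * (nzexp s == p.2)%:R.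
Proof. by []. Qed.

Lemma WD (L L' : seq (k * seq (option nat))) : wcq L -> wcq L' -> real L =1 real L' ->
  forall Phi : seq (option nat) -> k,
  \sum_(p <- L) p.1 * Phi p.2 = \sum_(p <- L') p.1 * Phi p.2.
Proof.
move=> hL hL' hr Phi.
set S := undup [seq p.2 | p <- L ++ L'].
have key : forall M : seq (k * seq (option nat)), {subset [seq p.2 | p <- M] <= S} ->
  \sum_(p <- M) p.1 * Phi p.2 = \sum_(a <- S) Phi a * \sum_(p <- M) p.1 * (a == p.2)%:R.
  move=> M hM; under [RHS]eq_bigr do rewrite mulr_sumr.
  rewrite exchange_big; apply: eq_big_seq => p hp.
  have pS : p.2 \in S by apply: hM; apply/mapP; exists p.
  transitivity (\sum_(a <- S) (a == p.2)%:R * (p.1 * Phi a)).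
    by rewrite sum_pred1 ?undup_uniq // pS mul1r.
  by apply: eq_bigr => a _; ring.
rewrite !key; first last.
- by move=> x hx; rewrite mem_undup map_cat mem_cat hx ?orbT.
- by move=> x hx; rewrite mem_undup map_cat mem_cat hx ?orbT.
apply: eq_big_seq => a; rewrite mem_undup => /mapP [p].
rewrite mem_cat => hp ->.
have hn : ncomp p.2 by case/orP: hp => h; [exact: (allP hL p h) | exact: (allP hL' p h)].
by have := hr p.2; rewrite !realE nzexp_id // => ->.
Qed.

Lemma inj_phi (L L' : seq (k * seq (option nat))) : wcq L -> wcq L' ->
  (real L =1 real L' <-> coefSh (phiL L) =1 coefSh (phiL L')).
Proof.
move=> hL hL'; split => h.
  by move=> c; rewrite !coefSh_phiL; exact: (WD _ _ hL hL' h (fun a => (0%N :: theta a == c)%:R)).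
have E : forall M : seq (k * seq (option nat)), wcq M -> forall s,
    real M s = coefSh (phiL M) (0%N :: theta (nzexp s)).
  move=> M hM s; rewrite realE coefSh_phiL; apply: eq_big_seq => p hp.
  by rewrite eqseq_cons eqxx /= eq_sym theta_inj ?ncomp_nzexp // (allP hM p hp).
by move=> s; rewrite !E // h.
Qed.

Lemma inj_psi (L L' : seq (k * seq (option nat))) : wcq L -> wcq L' ->
  (real L =1 real L' <-> coefSh (psiL L) =1 coefSh (psiL L')).
Proof.
move=> hL hL'; split => h.
  by move=> c; rewrite !coefSh_psiL; exact: (WD _ _ hL hL' h (fun a => (theta a == c)%:R)).
have E : forall M : seq (k * seq (option nat)), wcq M -> forall s,
    real M s = coefSh (psiL M) (theta (nzexp s)).
  move=> M hM s; rewrite realE coefSh_psiL; apply: eq_big_seq => p hp.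
  by rewrite eq_sym theta_inj ?ncomp_nzexp // (allP hM p hp).
by move=> s; rewrite !E // h.
Qed.

Lemma psmul_ext (F F' G G' : pser k) : F =1 F' -> G =1 G' -> psmul F G =1 psmul F' G'.
Proof. by move=> hF hG s; apply: eq_bigr => t _; rewrite hF hG. Qed.

Lemma psmul_scale (F G : pser k) c c' s :
  psmul (fun t => c * F t) (fun t => c' * G t) s = c * c' * psmul F G s.
Proof. by rewrite /psmul mulr_sumr; apply: eq_bigr => t _; ring. Qed.

Lemma psmul_real (L1 L2 : seq (k * seq (option nat))) s :
  psmul (real L1) (real L2) s = \sum_(p <- L1) \sum_(q <- L2) p.1 * q.1 * PP k s p.2 q.2.
Proof.
rewrite /psmul; under eq_bigr do rewrite big_distrlr.
rewrite exchange_big; apply: eq_bigr => p _; rewrite exchange_big.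
apply: eq_bigr => q _; rewrite /PP mulr_sumr; apply: eq_bigr => t _; rewrite /Mon /=; ring.
Qed.

Lemma real_mulL (L1 L2 : seq (k * seq (option nat))) : wcq L1 -> wcq L2 ->
  real (mulL L1 L2) =1 psmul (real L1) (real L2).
Proof.
move=> h1 h2 s; rewrite realE /mulL (@sum_pairs _ _ _ _ _ _ (fun a => (nzexp s == a)%:R)).
rewrite psmul_real; apply: eq_big_seq => p hp; apply: eq_big_seq => q hq.
by rewrite PQ //; [exact: (allP h1 p hp) | exact: (allP h2 q hq)].
Qed.

Definition piL (al : seq (option nat)) : seq (k * seq (option nat)) :=
  if hdw al then [:: (sgw k al, delw al)] else [::].

Lemma real_pi al s : real (piL al) s = wt k al * Mon k (delw al) s.
Proof. by rewrite /piL /wt /real; case: hdw; rewrite ?big_seq1 ?big_nil ?mul0r. Qed.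

Lemma real_linL (f : seq (option nat) -> seq (k * seq (option nat))) L s :
  real (linL f L) s = \sum_(p <- L) p.1 * real (f p.2) s.
Proof.
rewrite /real /linL big_flatten /= big_map; apply: eq_bigr => p _.
by rewrite big_map mulr_sumr; apply: eq_bigr => q _; rewrite mulrA.
Qed.

Lemma pcomp_delw al : ncomp al -> Defs.pcomp (delw al).
Proof. by elim: al => [|[[|n]|] al IH] //= h; rewrite IH. Qed.

Lemma pcomp_ncomp al : Defs.pcomp al -> ncomp al.
Proof. by elim: al => [|[[|n]|] al IH] //= h; rewrite IH. Qed.

Lemma pcomp_real_pi al s : Defs.pcomp al -> real (piL al) s = Mon k al s.
Proof.
move=> h; rewrite real_pi.
have -> : delw al = al by elim: al h => [|[[|n]|] al IH] //= h; rewrite IH.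
suff -> : wt k al = 1 by rewrite mul1r.
rewrite /wt; case: al h => [|[n|] al] //= h.
rewrite sgw_S /sgw; suff -> : count_mem None al = 0%N by [].
case/andP: h => _; elim: al => [|[[|m]|] al IH] //= h; rewrite IH.
Qed.

Lemma real2_linL2 T x y :
  real2 (linL2 piL T) x y = \sum_(p <- T) p.1 * (wt k p.2.1 * Mon k (delw p.2.1) x) *
                                            (wt k p.2.2 * Mon k (delw p.2.2) y).
Proof.
rewrite /real2 /linL2 big_flatten /= big_map; apply: eq_bigr => p _.
rewrite big_allpairs_dep /piL /wt.
case: (hdw p.2.1); case: (hdw p.2.2); rewrite ?big_seq1 ?big_nil /=; ring.
Qed.

Lemma real2_copL (T : seq (k * seq (option nat))) x y :
  real2 (copL T) x y = \sum_(p <- T) \sum_(i <- iota 0 (size p.2).+1)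
     p.1 * Mon k (take i p.2) x * Mon k (drop i p.2) y.
Proof. by rewrite /real2 /copL big_flatten big_map; apply: eq_bigr => p _; rewrite big_map. Qed.

Lemma pi_comult al : real2 (linL2 piL (copL [:: (1, al)])) =2 real2 (copL (piL al)).
Proof.
move=> x y; rewrite real2_linL2 /copL big_flatten big_seq1 big_map.
rewrite real2_copL /piL.
have := lemComult k al (fun u v => Mon k u x * Mon k v y) => /= H.
transitivity (\sum_(i <- iota 0 (size al).+1)
    wt k (take i al) * wt k (drop i al) * (Mon k (delw (take i al)) x * Mon k (delw (drop i al)) y)).
  by apply: eq_bigr => i _; ring.
rewrite H /wt; case: hdw; rewrite ?big_seq1 ?big_nil ?mul0r //=.
by rewrite mulr_sumr; apply: eq_bigr => i _; ring.
Qed.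
End Assembly.


Theorem theorem4p5 (k : comUnitRingType)
  (hQ : forall n : nat, (n.+1)%:R \is a @GRing.unit k) :
  (* (1) M_alpha |-> 1 (x) x^{(x)theta(alpha)} is a well-defined injective
         k-linear map WCQSym -> Sh(x) ... *)
  (forall L L' : seq (k * seq (option nat)), wcq L -> wcq L' ->
     (real L =1 real L' <-> coefSh (phiL L) =1 coefSh (phiL L')))
  (* ... whose image is exactly 1 (x) Sh^+(x) ... *)
  /\ (forall G : seq (k * seq nat),
        exists L : seq (k * seq (option nat)), wcq L /\ coefSh (phiL L) =1 coefSh (oneTensor G))
  (* ... which is unital ... *)
  /\ coefSh (phiL [:: (1 : k, [::])]) =1 coefSh [:: (1 : k, [:: 0%N])]
  (* ... and multiplicative (power-series product vs. <> in Sh(x)) *)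
  /\ (forall L1 L2 : seq (k * seq (option nat)), wcq L1 -> wcq L2 ->
        exists L : seq (k * seq (option nat)), wcq L /\ real L =1 psmul (real L1) (real L2)
                  /\ coefSh (phiL L) =1 coefSh (diamL (phiL L1) (phiL L2)))
  (* (2) in particular M_alpha |-> x^{(x)theta(alpha)} : WCQSym -> Sh^+(x)
         is an algebra isomorphism *)
  /\ (forall L L' : seq (k * seq (option nat)), wcq L -> wcq L' ->
        (real L =1 real L' <-> coefSh (psiL L) =1 coefSh (psiL L')))
  /\ (forall G : seq (k * seq nat),
        exists L : seq (k * seq (option nat)), wcq L /\ coefSh (psiL L) =1 coefSh G)
  /\ coefSh (psiL [:: (1 : k, [::])]) =1 coefSh [:: (1 : k, [::])]
  /\ (forall L1 L2 : seq (k * seq (option nat)), wcq L1 -> wcq L2 ->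
        exists L : seq (k * seq (option nat)), wcq L /\ real L =1 psmul (real L1) (real L2)
                  /\ coefSh (psiL L) =1 coefSh (shL (psiL L1) (psiL L2)))
  (* (3) the image of QSym is a subalgebra of Sh(x) *)
  /\ (exists L : seq (k * seq (option nat)), qsym L /\ coefSh (phiL L) =1 coefSh [:: (1 : k, [:: 0%N])])
  /\ (forall L1 L2 : seq (k * seq (option nat)), qsym L1 -> qsym L2 ->
        exists L : seq (k * seq (option nat)), qsym L /\ coefSh (phiL L) =1 coefSh (diamL (phiL L1) (phiL L2)))
  (* (4) QSym is a quotient Hopf algebra of 1 (x) Sh^+(x) ~ WCQSym (transported
         structure): there is a surjective Hopf algebra morphism pi, given on the
         basis M_alpha ~ 1 (x) x^{(x)theta(alpha)}, with values in QSym *)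
  /\ (exists pi : seq (option nat) -> seq (k * seq (option nat)),
        (forall al : seq (option nat), ncomp al -> qsym (pi al))
        (* surjective onto QSym *)
        /\ (forall Q : seq (k * seq (option nat)), qsym Q -> exists L : seq (k * seq (option nat)), wcq L /\ real (linL pi L) =1 real Q)
        (* unital and multiplicative *)
        /\ real (pi [::]) =1 Mon k [::]
        /\ (forall (al be : seq (option nat)) (L : seq (k * seq (option nat))), ncomp al -> ncomp be -> wcq L ->
              real L =1 psmul (Mon k al) (Mon k be) ->
              real (linL pi L) =1 psmul (real (pi al)) (real (pi be)))
        (* counital and comultiplicative *)
        /\ (forall al : seq (option nat), ncomp al -> real (pi al) [::] = (al == [::])%:R)
        /\ (forall al : seq (option nat), ncomp al ->
              real2 (linL2 pi (copL [:: (1 : k, al)])) =2 real2 (copL (pi al)))).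
Proof.
split; first by move=> L L' hL hL'; exact: inj_phi.
split.
  move=> G; exists [seq (p.1, thinv p.2) | p <- G]; split.
    by apply/allP => x /mapP [p _ ->]; exact: ncomp_thinv.
  rewrite (_ : phiL _ = oneTensor G) //.
  by rewrite /phiL /oneTensor -map_comp; apply: eq_map => p /=; rewrite theta_thinv.
split; first by move=> c.
split.
  move=> L1 L2 h1 h2; exists (mulL _ L1 L2); split; first exact: wcq_mulL.
  by split; [exact: real_mulL | exact: phiL_mul].
split; first by move=> L L' hL hL'; exact: inj_psi.
split.
  move=> G; exists [seq (p.1, thinv p.2) | p <- G]; split.
    by apply/allP => x /mapP [p _ ->]; exact: ncomp_thinv.
  rewrite (_ : psiL _ = G) //.
  rewrite /psiL -map_comp -[RHS]map_id; apply: eq_map => -[a g] /=.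
  by rewrite theta_thinv.
split; first by move=> c.
split.
  move=> L1 L2 h1 h2; exists (mulL _ L1 L2); split; first exact: wcq_mulL.
  by split; [exact: real_mulL | exact: psiL_mul].
split; first by exists [:: (1, [::])].
split.
  move=> L1 L2 h1 h2; exists (mulL _ L1 L2); split; first exact: qsym_mulL.
  exact: phiL_mul.
exists (piL k); split.
  move=> al hal; rewrite /qsym /piL; case: hdw => //=.
  by rewrite pcomp_delw.
split.
  move=> Q hQ'; exists Q; split.
    by apply/allP => p hp; apply: pcomp_ncomp; exact: (allP hQ' p hp).
  move=> s; rewrite real_linL; apply: eq_big_seq => p hp.
  by rewrite pcomp_real_pi //; exact: (allP hQ' p hp).
split; first by move=> s; rewrite real_pi mul1r.
split.
  move=> al be L hal hbe hL hr s.
  set L0 := mulL k [:: (1 : k, al)] [:: (1 : k, be)].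
  have w0 : wcq L0 by apply: wcq_mulL; rewrite /wcq /= ?hal ?hbe.
  have r0 : real L =1 real L0.
    move=> t; rewrite hr real_mulL ?/wcq /= ?hal ?hbe //.
    by apply: psmul_ext => u; rewrite /real big_seq1 mul1r.
  rewrite real_linL (WD _ _ _ hL w0 r0 (fun a => real (piL k a) s)).
  rewrite /L0 /mulL (@sum_pairs _ _ _ _ _ _ _ (fun a => real (piL k a) s)) !big_seq1 !mul1r.
  under eq_bigr do rewrite real_pi.
  rewrite (lemB _ _ _ hal hbe (fun w => Mon k w s)).
  rewrite (@psmul_ext _ _ (fun t => wt k al * Mon k (delw al) t) _ (fun t => wt k be * Mon k (delw be) t) (real_pi k al) (real_pi k be) s).
  rewrite psmul_scale; congr (_ * _).
  rewrite -[psmul _ _ _]/(PP k s _ _) PQ //; apply: pcomp_ncomp; exact: pcomp_delw.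
split.
  move=> al hal; rewrite real_pi; case: al hal => [|[m|] al] h.
  - by rewrite /Mon /= mul1r.
  - by rewrite delw_S /Mon /= mulr0.
  - by rewrite wt_N mul0r.
by move=> al hal; exact: pi_comult.
Qed.
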